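(* Consider the compound decision framework described in the context, with first selection rule $\mathbf s^1:\mathcal X\to\{0,1\}^m$, decision strategy $\tilde{\mathbf d}:\{0,1\}^m\times\mathcal X\to\mathcal D$ and selection strategy $\tilde{\mathbf s}:\mathcal D\times\mathcal X\to\{0,1\}^m$. Suppose (i) the composite selection is contracting: for every $\mathbf S\in\{0,1\}^m$, $\tilde{\mathbf s}(\tilde{\mathbf d}(\mathbf S,\mathbf X),\mathbf X)\preceq\mathbf S$ with probability 1; (ii) for all $t\ge1$ and all $\theta\in\Theta$, $r(\mathbf d^t,\mathbf s^t,\theta)\le q$. Then the decision rule $\mathbf d^T$ produced by the iteration controls the extra-selection risk at level $q$: for all $\theta\in\Theta$, $$r(\mathbf d^T,\mathbf s^{T+1},\theta)=\mathbb E_\theta\left[\frac{\sum_{i\in\mathcal S^{T+1}}\ell_i(D_i^T,\theta)}{1\vee|\mathcal S^{T+1}|}\right]\le q.$$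
   Context: Data $\mathbf X$ takes values in a space $\mathcal X$ with distribution $P_\theta$, $\theta\in\Theta$; $\mathbb E_\theta$ is expectation under $P_\theta$. There are $m$ tasks; task $i$ has a decision space $\mathcal D_i$ and loss $\ell_i:\mathcal D_i\times\Theta\to[0,1]$; $\mathcal D=\mathcal D_1\times\dots\times\mathcal D_m$. For a decision rule $\mathbf d:\mathcal X\to\mathcal D$ and selection rule $\mathbf s:\mathcal X\to\{0,1\}^m$, the selective risk is $r(\mathbf d,\mathbf s,\theta)=\mathbb E_\theta\big[\sum_{i=1}^m s_i(\mathbf X)\ell_i(d_i(\mathbf X),\theta)/(1\vee\sum_{i=1}^m s_i(\mathbf X))\big]$. For $\mathbf S,\mathbf S'\in\{0,1\}^m$, $\mathbf S\preceq\mathbf S'$ means $S_i\le S_i'$ for all $i$; the selected set of $\mathbf S$ is $\mathcal S=\{i:S_i=1\}$ and $|\mathcal S|=\sum_iS_i$. The iteration (Algorithm 1): $\mathbf S^1=\mathbf s^1(\mathbf X)$; for $t\ge1$, $\mathbf D^t=\tilde{\mathbf d}(\mathbf S^t,\mathbf X)$ and $\mathbf S^{t+1}=\tilde{\mathbf s}(\mathbf D^t,\mathbf X)$; $T$ is the first $t$ with $\mathbf S^{t+1}=\mathbf S^t$ (a random index). Cumulative rules: $\mathbf s^t(\mathbf X)=\mathbf S^t$ i.e. $\mathbf s^t=(\tilde{\mathbf s}\circ\tilde{\mathbf d})^{t-1}\circ\mathbf s^1$ where $(\tilde{\mathbf s}\circ\tilde{\mathbf d})(\mathbf S,\mathbf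 X)=\tilde{\mathbf s}(\tilde{\mathbf d}(\mathbf S,\mathbf X),\mathbf X)$, and $\mathbf d^t(\mathbf X)=\tilde{\mathbf d}(\mathbf s^t(\mathbf X),\mathbf X)=\mathbf D^t$. The rules $\mathbf d^T$ and $\mathbf s^{T+1}$ map $\mathbf X$ to $\mathbf D^{T}$ and $\mathbf S^{T+1}$ respectively. *)

(* Defs.v *)
From HB Require Import structures.
From mathcomp Require Import all_boot all_order all_algebra.
From mathcomp Require Import all_classical all_reals all_analysis.
Set Implicit Arguments. Unset Strict Implicit. Unset Printing Implicit Defensive.
Import Order.TTheory GRing.Theory Num.Theory.
Local Open Scope ring_scope.

Notation sel m := {ffun 'I_m -> bool}.

Definition sel_le (m : nat) (S S' : sel m) : Prop := forall i, S i ==> S' i.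

Definition sel_card (m : nat) (S : sel m) : nat := \sum_(i < m) nat_of_bool (S i).

Definition sel_risk (dsp : measure_display) (X : measurableType dsp) (R : realType)
  (Theta : Type) (P : Theta -> probability X R) (m : nat) (D : 'I_m -> Type)
  (loss : forall i : 'I_m, D i -> Theta -> R)
  (d : X -> forall i : 'I_m, D i) (s : X -> sel m) (theta : Theta) : \bar R :=
  (\int[P theta]_x
     ((\sum_(i < m) (nat_of_bool (s x i))%:R * loss i (d x i) theta)
        / (maxn 1 (sel_card (s x)))%:R)%:E)%E.

(* Algorithm 1: S^1 = s1 X; S^{t+1} = stilde (dtilde S^t X) X.
   algS t x = S^t (for t >= 1; the value at t = 0 is irrelevant). *)
Definition algS (X : Type) (m : nat) (Dec : Type)
  (s1 : X -> sel m) (dtilde : sel m -> X -> Dec) (stilde : Dec -> X -> sel m)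
  (t : nat) (x : X) : sel m :=
  iter t.-1 (fun S => stilde (dtilde S x) x) (s1 x).

Definition algD (X : Type) (m : nat) (Dec : Type)
  (s1 : X -> sel m) (dtilde : sel m -> X -> Dec) (stilde : Dec -> X -> sel m)
  (t : nat) (x : X) : Dec :=
  dtilde (algS s1 dtilde stilde t x) x.

(* T = first t >= 1 with S^{t+1} = S^t; if no such t exists (only possible
   outside a null set under the contraction hypothesis), T := 0 by convention. *)
Definition algT (X : Type) (m : nat) (Dec : Type)
  (s1 : X -> sel m) (dtilde : sel m -> X -> Dec) (stilde : Dec -> X -> sel m)
  (x : X) : nat :=
  let P := fun t => (0 < t)%N && (algS s1 dtilde stilde t.+1 x == algS s1 dtilde stilde t x) in
  match boolp.pselect (exists t, P t) with
  | left e => ex_minn e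
  | right _ => 0%N
  end.

(* Main.v *)
Require Import Defs.
From HB Require Import structures.
From mathcomp Require Import all_boot all_order all_algebra.
From mathcomp Require Import all_classical all_reals all_analysis measurable_realfun.
From mathcomp Require Import zify.
Import Order.TTheory GRing.Theory Num.Theory.
Local Open Scope ring_scope.

Lemma card_lt m (S S' : sel m) : sel_le S' S -> S' != S -> (sel_card S' < sel_card S)%N.
Proof.
move=> le neq.
case: (boolP [exists i, S' i != S i]) => [/existsP[i Hi]|/existsPn H]; last first.
  by exfalso; move/eqP: neq; apply; apply/ffunP => i; apply/eqP; have:= H i; rewrite negbK.
have [H1 H2] : S' i = false /\ S i = true.
  by move: (le i) Hi; case: (S' i); case: (S i).
rewrite /sel_card (bigD1 i) //= [X in (_ < X)%N](bigD1 i) //= H1 H2 add0n add1n ltnS.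
by apply: leq_sum => j _; have := le j; case: (S' j); case: (S j).
Qed.

Section Int.
Local Open Scope ereal_scope.
Import HBNNSimple.
Context d (T : measurableType d) (R : realType) (mu : {measure set T -> \bar R}).

Lemma le_int_nomeas (f g : T -> \bar R) : (forall x, 0 <= f x) ->
  (forall x, f x <= g x) -> \int[mu]_x f x <= \int[mu]_x g x.
Proof.
move=> f0 fg; rewrite !ge0_integralTE //; last by move=> x; exact: le_trans (f0 x) (fg x).
apply: ereal_sup_le => _ [h hf <-]; exists h => //= x; exact: le_trans (hf x) (fg x).
Qed.

Lemma ae_le_int (f g : T -> \bar R) : (forall x, 0 <= f x) -> (forall x, 0 <= g x) ->
  {ae mu, forall x, f x <= g x} -> \int[mu]_x f x <= \int[mu]_x g x.
Proof.
move=> f0 g0 [N [mN N0 subN]].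
rewrite ge0_integralTE //.
apply: ge_ereal_sup => _ [h hf <-].
rewrite -integralT_nnsfun (ge0_negligible_integral _ _ _ _ N0) //; last 2 first.
- by apply/measurable_EFinP; exact: (measurable_funP h).
- by move=> x _; rewrite lee_fin.
rewrite integral_mkcond; apply: le_int_nomeas.
  by move=> x; rewrite patchE; case: ifP => // _; rewrite lee_fin.
move=> x; rewrite patchE; case: ifPn => // /set_mem [_ xN].
apply: le_trans (hf x) _.
apply: contrapT => H; apply: xN; apply: subN => /= H'; exact: H.
Qed.
End Int.

Lemma card_le m (S : sel m) : (sel_card S <= m)%N.
Proof.
rewrite /sel_card -[X in (_ <= X)%N](card_ord m) -sum1_card.
by apply: leq_sum => i _; case: (S i).
Qed.

Lemma stab (m : nat) (F : sel m -> sel m) (a0 : sel m)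
  (good : forall S, sel_le (F S) S) :
  exists k, (k <= m)%N /\ iter k.+1 F a0 = iter k F a0.
Proof.
apply: contrapT => H.
have H' : forall k, (k <= m)%N -> iter k.+1 F a0 != iter k F a0.
  move=> k km; apply/eqP => E; apply: H; exists k; split => //.
have : forall k, (k <= m.+1)%N -> (sel_card (iter k F a0) + k <= sel_card a0)%N.
  elim => [|k IH] km; first by rewrite addn0.
  have := @card_lt _ _ _ (good (iter k F a0)) (H' k km).
  have := IH (ltnW km).
  rewrite iterS; lia.
move=> /(_ m.+1 (leqnn _)); have := @card_le _ a0; lia.
Qed.

Lemma fixed_forever (T : Type) (F : T -> T) a0 k :
  iter k.+1 F a0 = iter k F a0 -> forall j, iter (k + j) F a0 = iter k F a0.
Proof.
move=> hk; elim => [|j IH]; first by rewrite addn0.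
by rewrite addnS iterS IH -iterS hk.
Qed.

Theorem theorem1 (dsp : measure_display) (X : measurableType dsp) (R : realType)
  (Theta : Type) (P : Theta -> probability X R) (m : nat) (D : 'I_m -> Type)
  (loss : forall i : 'I_m, D i -> Theta -> R)
  (loss_range : forall (i : 'I_m) (a : D i) (theta : Theta),
      0 <= loss i a theta <= 1)
  (s1 : X -> sel m)
  (dtilde : sel m -> X -> forall i : 'I_m, D i)
  (stilde : (forall i : 'I_m, D i) -> X -> sel m)
  (q : R)
  (contracting : forall (theta : Theta) (S : sel m),
      {ae P theta, forall x, sel_le (stilde (dtilde S x) x) S})
  (risk_t : forall (t : nat) (theta : Theta), (1 <= t)%N ->
      (sel_risk P loss (algD s1 dtilde stilde t) (algS s1 dtilde stilde t) theta
         <= q%:E)%E) :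
  forall theta : Theta,
    (sel_risk P loss
       (fun x => algD s1 dtilde stilde (algT s1 dtilde stilde x) x)
       (fun x => algS s1 dtilde stilde (algT s1 dtilde stilde x).+1 x) theta
     <= q%:E)%E.
Proof.
move=> theta.
have ae_good : {ae P theta, forall x, forall S, sel_le (stilde (dtilde S x) x) S}.
  by apply: filter_forall => S; exact: contracting.
apply: le_trans (risk_t m.+2 theta isT).
have nonneg : forall (d : X -> forall i, D i) (s : X -> sel m) x,
  (0 <= ((\sum_(i < m) (nat_of_bool (s x i))%:R * loss i (d x i) theta)
        / (maxn 1 (sel_card (s x)))%:R)%:E)%E.
  move=> d s x; rewrite lee_fin; apply: divr_ge0 => //.
  apply: sumr_ge0 => i _; apply: mulr_ge0 => //.
  by case/andP: (loss_range i (d x i) theta).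
rewrite /sel_risk; apply: ae_le_int => //.
apply: filterS ae_good => x good.
suff [-> ->] : algS s1 dtilde stilde (algT s1 dtilde stilde x).+1 x = algS s1 dtilde stilde m.+2 x /\
  algD s1 dtilde stilde (algT s1 dtilde stilde x) x = algD s1 dtilde stilde m.+2 x by [].
have [k [km hk]] := @stab _ _ (s1 x) good.
have hP : exists t, (0 < t)%N && (algS s1 dtilde stilde t.+1 x == algS s1 dtilde stilde t x).
  by exists k.+1; apply/andP; split => //; apply/eqP; exact: hk.
rewrite /algT /=; case: boolp.pselect => [e|ne]; last by exfalso; exact: ne hP.
case: ex_minnP => T /andP[T0 /eqP hT] Tmin.
have Tk : (T <= k.+1)%N by apply: Tmin; apply/andP; split => //; apply/eqP; exact: hk.
case: T T0 hT Tmin Tk => // j _ hT _ Tk.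
pose F := fun S : sel m => stilde (dtilde S x) x.
have hT' : iter j.+1 F (s1 x) = iter j F (s1 x) := hT.
have E := @fixed_forever _ F (s1 x) j hT'.
have jm : (j <= m.+1)%N by lia.
have Em : iter m.+1 F (s1 x) = iter j F (s1 x) by rewrite -(subnKC jm) E.
split.
  by change (iter j.+1 F (s1 x) = iter m.+1 F (s1 x)); rewrite Em hT'.
by change (dtilde (iter j F (s1 x)) x = dtilde (iter m.+1 F (s1 x)) x); rewrite Em.
Qed.
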